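(* Let $p$ be an odd prime, let $H\le\mathrm{S}_{n}$, $n=pk$, have orbits $\Omega_1,\dots,\Omega_k$ each of size $p$ such that each $D_i:=H|_{\Omega_i}$ is permutation isomorphic to the dihedral group $\mathrm{D}_{2p}$ of order $2p$ in its natural action on $p$ points. Let $G_i$ be the Sylow $p$-subgroup of $D_i$, and for $q\in\{2,p\}$ let $H_q$ be a Sylow $q$-subgroup of $H$. Let $\alpha_i\in\Omega_i$ ($1\le i\le k$) be points with $H_2|_{\Omega_i}=(D_i)_{\alpha_i}$ (such points exist). For $2\le i\le k$ let $\phi_i:\Omega_1\to\Omega_i$ be a bijection witnessing a permutation isomorphism from $D_1$ to $D_i$ with $\phi_i(\alpha_1)=\alpha_i$. Let $K=\langle\overline{\phi_i}:2\le i\le k\rangle$, $L=\langle N_{\mathrm{Sym}(\Omega_1)}(G_1),\dots,N_{\mathrm{Sym}(\Omega_k)}(G_k),K\rangle$ and $I=N_L(H_p)\cap N_L(H_2)$. Then $N_{\mathrm{S}_n}(H)=IH$.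
   Context: Subgroups of $\mathrm{Sym}(\Omega_i)$ are regarded as subgroups of $\mathrm{S}_n$ with support $\Omega_i$. $(D_i)_{\alpha_i}$ is the point stabiliser. A bijection $\phi:\Omega_1\to\Omega_i$ witnesses a permutation isomorphism from $D_1$ to $D_i$ if there is an isomorphism $\psi:D_1\to D_i$ with $\phi(\delta^g)=\phi(\delta)^{\psi(g)}$ for all $\delta\in\Omega_1$, $g\in D_1$. For a bijection $\varphi:\Omega_1\to\Omega_i$ ($i\neq 1$), $\overline\varphi$ is the involution in $\mathrm{Sym}(\Omega_1\cup\Omega_i)$ with $\alpha^{\overline\varphi}=\varphi(\alpha)$ for $\alpha\in\Omega_1$. *)

(* Defs.v *)
From mathcomp Require Import all_boot all_algebra all_fingroup all_solvable.
Set Implicit Arguments. Unset Strict Implicit. Unset Printing Implicit Defensive.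
Local Open Scope group_scope.

(* Restriction H|_S of a permutation group H to an invariant set S, regarded
   as a subgroup of Sym(S) inside Sym(T) (support S). *)
Definition restr_grp (T : finType) (S : {set T}) (H : {set {perm T}})
  : {set {perm T}} := restr_perm S @* H.

Definition witnesses_perm_iso (T1 T2 : finType) (phi : T1 -> T2)
  (A : {set T1}) (D1 : {set {perm T1}}) (B : {set T2}) (D2 : {set {perm T2}}) :=
  [/\ {in A &, injective phi}, phi @: A = B &
    exists psi : {perm T1} -> {perm T2},
      [/\ {in D1 &, {morph psi : x y / x * y}}, {in D1 &, injective psi},
          psi @: D1 = D2 &
          forall delta g, delta \in A -> g \in D1 ->
            phi (g delta) = (psi g) (phi delta)]].

Definition perm_iso (T1 T2 : finType)
  (A : {set T1}) (D1 : {set {perm T1}}) (B : {set T2}) (D2 : {set {perm T2}}) :=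
  exists phi : T1 -> T2, witnesses_perm_iso phi A D1 B D2.

Definition dihedral_nat (p : nat) : {set {perm 'Z_p}} :=
  [set s : {perm 'Z_p} | [exists a : bool, exists b : 'Z_p,
     [forall x : 'Z_p, s x == ((if a then - x else x) + b)%R]]].

Definition bar_involution (T : finType) (A : {set T}) (phi : T -> T)
  (s : {perm T}) :=
  (forall x, x \in A -> s x = phi x /\ s (phi x) = x) /\
  (forall x, x \notin A -> x \notin phi @: A -> s x = x).

(* Main.v *)
Require Import Defs.
From mathcomp Require Import all_boot all_algebra all_fingroup all_solvable.
Set Implicit Arguments. Unset Strict Implicit. Unset Printing Implicit Defensive.
Local Open Scope group_scope.

Lemma dihedral_card (p : nat) : 1 < p -> #|dihedral_nat p| <= 2 * p.
Proof.
move=> p1.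
pose f (ab : bool * 'Z_p) : {perm 'Z_p} :=
  odflt 1 [pick s : {perm 'Z_p} | [forall x : 'Z_p, s x == ((if ab.1 then - x else x) + ab.2)%R]].
have sub : dihedral_nat p \subset f @: setT.
  apply/subsetP=> s; rewrite inE => /existsP[a /existsP[b /forallP Hs]].
  apply/imsetP; exists (a, b); first by rewrite inE.
  rewrite /f; case: pickP => [s' /forallP Hs'|/(_ s)]; last by rewrite /= (introT forallP Hs).
  by apply/permP=> x; rewrite (eqP (Hs x)) (eqP (Hs' x)).
apply: leq_trans (subset_leq_card sub) _.
apply: leq_trans (leq_imset_card _ _) _.
rewrite cardsT card_prod card_bool card_ord.
by rewrite Zp_cast.
Qed.

Section Main.
Variables (p k n : nat) (H : {group {perm 'I_n}})
  (Omega : 'I_k -> {set 'I_n}) (i1 : 'I_k)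
  (G : 'I_k -> {group {perm 'I_n}}) (Hp H2 : {group {perm 'I_n}})
  (phi : 'I_k -> 'I_n -> 'I_n)
  (phibar : 'I_k -> {perm 'I_n}).
Hypothesis pP : prime p.
Hypothesis oddp : odd p.
Hypothesis Oinj : injective Omega.
Hypothesis Oorb : [set orbit 'P H x | x : 'I_n] = [set Omega i | i : 'I_k].
Hypothesis Ocard : forall i, #|Omega i| = p.
Hypothesis Diso : forall i, perm_iso [set: 'Z_p] (dihedral_nat p)
                      (Omega i) (restr_grp (Omega i) H).
Hypothesis Gsyl : forall i, G i \in 'Syl_p(restr_grp (Omega i) H).
Hypothesis Hpsyl : Hp \in 'Syl_p(H).
Hypothesis H2syl : H2 \in 'Syl_2(H).
Hypothesis Wit : forall i, i != i1 ->
     witnesses_perm_iso (phi i) (Omega i1) (restr_grp (Omega i1) H)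
                        (Omega i) (restr_grp (Omega i) H).
Hypothesis Bar : forall i, i != i1 -> bar_involution (Omega i1) (phi i) (phibar i).

Definition D i : {group {perm 'I_n}} := (restr_perm (Omega i) @* H)%G.
Lemma DE i : restr_grp (Omega i) H = D i. Proof. by []. Qed.

Lemma p_gt1 : 1 < p. Proof. exact: prime_gt1. Qed.

Lemma orbitO a : exists i, orbit 'P H a = Omega i.
Proof.
have : orbit 'P H a \in [set orbit 'P H x | x : 'I_n] by apply: imset_f.
by rewrite Oorb => /imsetP[i _ ->]; exists i.
Qed.

Lemma coverO a : exists i, a \in Omega i.
Proof. by have [i Ei] := orbitO a; exists i; rewrite -Ei; exact: orbit_refl. Qed.

Lemma OmegaE i a : a \in Omega i -> Omega i = orbit 'P H a.
Proof.
have : Omega i \in [set Omega i | i : 'I_k] by apply: imset_f.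
rewrite -Oorb => /imsetP[x _ Ex]; rewrite Ex => ax.
by symmetry; apply/orbit_eqP.
Qed.

Lemma Odisj i j a : a \in Omega i -> a \in Omega j -> i = j.
Proof. by move=> ai aj; apply: Oinj; rewrite (OmegaE ai) (OmegaE aj). Qed.

Lemma HN i : H \subset 'N(Omega i | 'P).
Proof.
have [a ai] : exists a, a \in Omega i.
  by apply/set0Pn; rewrite -card_gt0 Ocard prime_gt0.
by rewrite (OmegaE ai); apply: acts_orbit; rewrite subsetT.
Qed.

Lemma restrE i h a : h \in H -> a \in Omega i -> restr_perm (Omega i) h a = h a.
Proof. by move=> hH ai; rewrite restr_permE // (subsetP (HN i)). Qed.

Lemma DP i g : g \in D i -> exists2 h, h \in H & g = restr_perm (Omega i) h.
Proof. by rewrite /D /= morphimEsub ?HN // => /imsetP[h hH ->]; exists h. Qed.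

Lemma restrD i h : h \in H -> restr_perm (Omega i) h \in D i.
Proof. by move=> hH; rewrite /D /= morphimEsub ?HN //; apply: imset_f. Qed.

Lemma D_on i g : g \in D i -> perm_on (Omega i) g.
Proof. by case/DP=> h _ ->; apply: restr_perm_on. Qed.

Lemma Dcard i : #|D i| = #|dihedral_nat p|.
Proof.
have [f [_ _ [psi [_ psiI psiD _]]]] := Diso i.
by rewrite -DE -psiD card_in_imset.
Qed.

Lemma Dle i : #|D i| <= 2 * p.
Proof. by rewrite Dcard; apply: dihedral_card p_gt1. Qed.

Lemma Ddvd i : p %| #|D i|.
Proof.
have [a ai] : exists a, a \in Omega i.
  by apply/set0Pn; rewrite -card_gt0 Ocard prime_gt0.
suff Eo : orbit 'P (D i) a = Omega i by rewrite -(Ocard i) -Eo dvdn_orbit.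
rewrite (OmegaE ai); apply/setP=> b; apply/orbitP/orbitP=> [[g gD <-]|[h hH <-]].
  by case/DP: gD => h hH ->; exists h => //; rewrite /= !apermE restrE.
by exists (restr_perm (Omega i) h); rewrite ?restrD //= !apermE restrE.
Qed.

Lemma Dcase i : #|D i| = p \/ #|D i| = (2 * p)%N.
Proof.
have [m Em0] := dvdnP (Ddvd i).
have Em : #|D i| = (m * p)%N := Em0.
clear Em0.
have := Dle i; rewrite Em leq_pmul2r ?prime_gt0 //.
have : 0 < m by have : 0 < #|D i| := cardG_gt0 _; rewrite Em muln_gt0 => /andP[].
case: m Em => [|[|[|m]]] // Em _ _; by [left; rewrite mul1n|right].
Qed.

Lemma Gsyl' i : p.-Sylow(D i) (G i).
Proof. by have := Gsyl i; rewrite inE. Qed.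

Lemma Gcard i : #|G i| = p.
Proof.
rewrite (card_Hall (Gsyl' i)).
case: (Dcase i) => ->; first by rewrite part_pnat_id ?pnat_id.
rewrite partnM // ?prime_gt0 // (part_pnat_id (pnat_id pP)) part_p'nat ?mul1n //.
rewrite p'natE //; apply/negP=> /(dvdn_leq (isT : 0 < 2)).
by rewrite leq_eqVlt ltnNge prime_gt1 // orbF => /eqP p2; move: oddp; rewrite p2.
Qed.

Lemma Gnorm i : G i <| D i.
Proof.
have sGD := pHall_sub (Gsyl' i).
case: (Dcase i) => Ed.
  have EGD : G i :=: D i.
    by apply/eqP; rewrite eqEcard sGD Ed Gcard leqnn.
  by rewrite /normal sGD EGD normG.
apply: index2_normal => //.
by apply/eqP; rewrite -(eqn_pmul2l (prime_gt0 pP)) -{1}(Gcard i) Lagrange // Ed mulnC.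
Qed.

Lemma conjE (g y : {perm 'I_n}) b : (g ^ y) b = y (g (y^-1 b)).
Proof. by rewrite conjgE !permM. Qed.

Lemma Gconj i j y : (forall g, g \in D i -> g ^ y \in D j) -> G i :^ y = G j.
Proof.
move=> hyp.
have sub : G i :^ y \subset D j.
  apply/subsetP=> z; rewrite mem_conjg => zG.
  rewrite -(conjgKV y z); apply: hyp.
  exact: subsetP (pHall_sub (Gsyl' i)) _ zG.
have sub2 : G i :^ y \subset G j.
  by rewrite (sub_normal_Hall (Gsyl' j) (Gnorm j) sub) pgroupJ (pHall_pgroup (Gsyl' i)).
by apply/eqP; rewrite eqEcard sub2 cardJg !Gcard leqnn.
Qed.

Lemma restr_order x q : x \in H -> prime q -> #[x] = q ->
  exists i, #[restr_perm (Omega i) x] = q.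
Proof.
move=> xH qP ox.
have x1 : x != 1 by rewrite -order_eq1 ox; apply/eqP=> q1; rewrite q1 in qP.
have [a xa] : exists a, x a != a.
  apply/existsP; apply: contraR x1 => /existsPn xa.
  by apply/eqP/permP=> a; rewrite perm1; apply/eqP; move: (xa a); rewrite negbK.
have [i ai] := coverO a.
exists i.
have xN : x \in 'N(Omega i | 'P) := subsetP (HN i) x xH.
have dv := morph_order (restr_perm_morphism (Omega i)) xN.
rewrite ox in dv.
apply/(prime_nt_dvdP qP) => //.
rewrite order_eq1; apply: contra xa => /eqP r1.
by rewrite -(restrE xH ai) r1 perm1.
Qed.

Lemma prime_H q : prime q -> q %| #|H| -> q = 2 \/ q = p.
Proof.
move=> qP /(Cauchy qP)[x xH ox].
have [i oi] := restr_order xH qP ox.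
have : q %| #|D i| by rewrite -oi order_dvdG // restrD.
have q1 : q != 1%N by rewrite neq_ltn prime_gt1 ?orbT.
case: (Dcase i) => ->; first by move/(prime_nt_dvdP pP q1); right.
rewrite Euclid_dvdM // => /orP[|].
  by move/(prime_nt_dvdP (isT : prime 2) q1); left.
by move/(prime_nt_dvdP pP q1); right.
Qed.

Lemma conj_stable (A : {set {perm 'I_n}}) h :
  (forall x, x \in A -> x ^ h \in A) -> A :^ h = A.
Proof.
move=> hyp; apply/eqP; rewrite eqEcard cardJg leqnn andbT.
apply/subsetP=> z; rewrite mem_conjg => zA.
by rewrite -(conjgKV h z); apply: hyp.
Qed.

Definition P : {group {perm 'I_n}} :=
  (H :&: \bigcap_(i : 'I_k) restr_perm (Omega i) @*^-1 G i)%G.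

Lemma PP x : reflect (x \in H /\ forall i, restr_perm (Omega i) x \in G i) (x \in P).
Proof.
apply: (iffP idP).
  case/setIP=> xH /bigcapP xi; split=> // i.
  by have /morphpreP[] := xi i isT.
case=> xH xi; apply/setIP; split=> //; apply/bigcapP=> i _.
apply: mem_morphpre; last exact: xi.
exact: (subsetP (HN i)).
Qed.

Lemma Hpsyl' : p.-Sylow(H) Hp.
Proof. by have := Hpsyl; rewrite inE. Qed.

Lemma H2syl' : 2.-Sylow(H) H2.
Proof. by have := H2syl; rewrite inE. Qed.

Lemma P_pgroup : p.-group P.
Proof.
apply/pgroupP=> q qP /(Cauchy qP)[x /PP[xH xG] ox].
have [i oi] := restr_order xH qP ox.
have : q %| #|G i| by rewrite -oi order_dvdG.
rewrite Gcard => /(prime_nt_dvdP pP); rewrite inE => -> //.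
by rewrite neq_ltn prime_gt1 ?orbT.
Qed.

Lemma Hp_sub_P : Hp \subset P.
Proof.
apply/subsetP=> h hHp.
have hH : h \in H := subsetP (pHall_sub Hpsyl') h hHp.
apply/PP; split=> // i.
have sub : restr_perm (Omega i) @* Hp \subset D i.
  by apply: morphimS; apply: pHall_sub Hpsyl'.
have : restr_perm (Omega i) @* Hp \subset G i.
  rewrite (sub_normal_Hall (Gsyl' i) (Gnorm i) sub).
  exact: morphim_pgroup (pHall_pgroup Hpsyl').
move/subsetP; apply; apply: mem_morphim => //.
exact: subsetP (HN i) h hH.
Qed.

Lemma PE : P :=: Hp.
Proof.
by apply: (sub_pHall Hpsyl' P_pgroup Hp_sub_P); apply: subsetIl.
Qed.

Lemma Hp_normal : Hp <| H.
Proof.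
rewrite /normal (pHall_sub Hpsyl') -PE /=.
apply/subsetP=> h hH; apply/normP; apply: conj_stable => x /PP[xH xG].
apply/PP; split=> [|i]; first by rewrite groupJ.
have dN := subsetP (HN i).
rewrite morphJ ?dN //.
by rewrite memJ_norm ?xG //; apply: (subsetP (normal_norm (Gnorm i))); apply: restrD.
Qed.

Lemma HpN : 'N(H) \subset 'N(Hp).
Proof.
apply/subsetP=> x xN; apply/normP.
have sub : Hp :^ x \subset H.
  by rewrite -(normP xN) conjSg (pHall_sub Hpsyl').
have sub2 : Hp :^ x \subset Hp.
  by rewrite (sub_normal_Hall Hpsyl' Hp_normal sub) pgroupJ (pHall_pgroup Hpsyl').
by apply/eqP; rewrite eqEcard sub2 cardJg leqnn.
Qed.

Lemma HY : Hp <*> H2 = H.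
Proof.
have sMH : Hp <*> H2 \subset H by rewrite join_subG (pHall_sub Hpsyl') (pHall_sub H2syl').
apply: index1g => //.
apply/eqP; rewrite eqn_leq indexg_gt0 andbT leqNgt; apply/negP => d1'.
move: d1'; set d := #|H : _| => d1'.
have qP := pdiv_prime d1'.
have qd := pdiv_dvd d.
have : pdiv d %| #|H| by apply: dvdn_trans qd (dvdn_indexg _ _).
move/(prime_H qP).
have hp : p^'.-nat (pdiv d).
  apply: (pnat_dvd qd); apply: (pnat_dvd (indexgS H (joing_subl _ _))).
  by case/and3P: Hpsyl'.
have h2 : 2^'.-nat (pdiv d).
  apply: (pnat_dvd qd); apply: (pnat_dvd (indexgS H (joing_subr _ _))).
  by case/and3P: H2syl'.
rewrite (pnatE _ qP) in hp; rewrite (pnatE _ qP) in h2.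
by case=> Eq; rewrite Eq !inE ?eqxx in hp h2.
Qed.

Lemma fix_imset (t : {perm 'I_n}) (S : {set 'I_n}) : {in S, forall b, t b = b} -> t @: S = S.
Proof.
move=> tS; apply/setP=> b; apply/imsetP/idP=> [[c cS ->]|bS]; first by rewrite tS.
by exists b; rewrite ?tS.
Qed.

Lemma fix_conj (t g : {perm 'I_n}) (S : {set 'I_n}) :
  {in S, forall b, t b = b} -> perm_on S g -> g ^ t = g.
Proof.
move=> tS gS; apply/permP=> b; rewrite conjE.
have [bS|bS] := boolP (b \in S).
  have tb : t^-1 b = b by rewrite -{1}(tS b bS) permK.
  by rewrite tb tS // perm_closed.
have tb : t^-1 b \notin S.
  by apply: contra bS => tbS; rewrite -(permKV t b) tS.
by rewrite (out_perm gS tb) permKV (out_perm gS bS).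
Qed.

Lemma Onot i j b : i != j -> b \in Omega i -> b \notin Omega j.
Proof. by move=> ij bi; apply: contra ij => bj; rewrite (Odisj bi bj). Qed.

Section Bar.
Variable i : 'I_k.
Hypothesis ii1 : i != i1.
Let t := phibar i.
Let A := Omega i1.

Lemma phiA : phi i @: A = Omega i.
Proof. by case: (Wit ii1). Qed.

Lemma tA a : a \in A -> t a = phi i a.
Proof. by case: (Bar ii1) => h _ aA; case: (h a aA). Qed.

Lemma tphiA a : a \in A -> t (phi i a) = a.
Proof. by case: (Bar ii1) => h _ aA; case: (h a aA). Qed.

Lemma tout b : b \notin A -> b \notin Omega i -> t b = b.
Proof. by case: (Bar ii1) => _ h bA bi; apply: h; rewrite ?phiA. Qed.

Lemma tt : t * t = 1.
Proof.
apply/permP=> b; rewrite permM perm1.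
have [bA|bA] := boolP (b \in A); first by rewrite [t b]tA // tphiA.
have [bi|bi] := boolP (b \in Omega i); last by rewrite !tout.
by move: bi; rewrite -phiA => /imsetP[c cA ->]; rewrite tphiA // tA.
Qed.

Lemma tV : t^-1 = t.
Proof. by rewrite -[t^-1]mulg1 -tt mulKg. Qed.

Lemma t_block l : t @: Omega l = Omega (tperm i1 i l).
Proof.
case: (tpermP i1 i l) => [->|->|l1 li].
- by rewrite -phiA; apply: eq_in_imset => a aA; rewrite tA.
- rewrite -phiA -imset_comp; rewrite -[RHS]imset_id.
  by apply: eq_in_imset => a aA /=; rewrite tphiA.
apply: fix_imset => b bl; apply: tout.
  by rewrite /A; apply: (Onot _ bl); apply/eqP.
by apply: (Onot _ bl); apply/eqP.
Qed.

Lemma t_psi : exists psi : {perm 'I_n} -> {perm 'I_n},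
  psi @: D i1 = D i /\ {in D i1, forall g, g ^ t = psi g}.
Proof.
case: (Wit ii1) => _ _ [psi [_ _ psiD psiE]].
exists psi; split=> // g gD; have gon := D_on gD.
have pgD : psi g \in D i by rewrite -DE -psiD; apply: imset_f.
have pon := D_on pgD.
apply/permP=> b; rewrite conjE tV.
have [bi|bi] := boolP (b \in Omega i).
  move: (bi); rewrite -phiA => /imsetP[c cA ->].
  by rewrite tphiA // tA ?perm_closed // psiE.
rewrite (out_perm pon bi).
have [bA|bA] := boolP (b \in A); last by rewrite [t b]tout // (out_perm gon bA) tout.
have pbi : phi i b \in Omega i by rewrite -phiA imset_f.
have pnA : phi i b \notin A by rewrite /A; apply: (Onot _ pbi).
by rewrite [t b]tA // (out_perm gon pnA) tphiA.
Qed.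

Lemma t_D1 g : g \in D i1 -> g ^ t \in D i.
Proof.
have [psi [psiD psiE]] := t_psi => gD.
by rewrite psiE // -psiD imset_f.
Qed.

Lemma t_D l g : g \in D l -> g ^ t \in D (tperm i1 i l).
Proof.
case: (tpermP i1 i l) => [->|->|l1 li]; first exact: t_D1.
- have [psi [psiD psiE]] := t_psi.
  rewrite -psiD => /imsetP[g' g'D ->].
  by rewrite -psiE // -conjgM tt conjg1.
move=> gD; rewrite (fix_conj _ (D_on gD)) //.
move=> b bl; apply: tout.
  by rewrite /A; apply: (Onot _ bl); apply/eqP.
by apply: (Onot _ bl); apply/eqP.
Qed.

End Bar.

Definition Kg : {group {perm 'I_n}} := <<[set phibar i | i in [set i | i != i1]]>>%G.
Definition Lg : {group {perm 'I_n}} :=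
  <<(\bigcup_(i : 'I_k) 'N_(perm.Sym (Omega i))(G i)) :|: Kg>>%G.

Definition good (x : {perm 'I_n}) :=
  forall l, exists j, x @: Omega l = Omega j /\ G l :^ x = G j.

Lemma imsetM (x y : {perm 'I_n}) (S : {set 'I_n}) : (x * y) @: S = y @: (x @: S).
Proof. by rewrite -imset_comp; apply: eq_imset => a; rewrite permM. Qed.

Lemma goodM x y : good x -> good y -> good (x * y).
Proof.
move=> gx gy l; have [j [xj Gj]] := gx l; have [m [ym Gm]] := gy j.
by exists m; rewrite imsetM xj ym conjsgM Gj Gm.
Qed.

Lemma mem_imset_perm (x : {perm 'I_n}) (S : {set 'I_n}) b :
  (b \in x @: S) = (x^-1 b \in S).
Proof. by rewrite -{1}(permKV x b) mem_imset //; apply: perm_inj. Qed.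

Lemma NH_good x : x \in 'N(H) -> good x.
Proof.
move=> xN l.
have [a al] : exists a, a \in Omega l.
  by apply/set0Pn; rewrite -card_gt0 Ocard prime_gt0.
have [j xaj] := coverO (x a).
have blk : x @: Omega l = Omega j.
  rewrite (OmegaE al) (OmegaE xaj); apply/setP=> b.
  have E : orbit 'P H (x a) = orbit 'P (H :^ x) (x a) by rewrite (normP xN).
  rewrite mem_imset_perm E.
  by have := orbit_conjsg 'P H x a (x^-1 b); rewrite /= !apermE permKV => ->.
exists j; split=> //; apply: Gconj => g /DP[h hH ->].
have hxH : h ^ x \in H by rewrite memJ_norm.
suff -> : restr_perm (Omega l) h ^ x = restr_perm (Omega j) (h ^ x) by apply: restrD.
apply/permP=> b; rewrite conjE.
have [bj|bj] := boolP (b \in Omega j).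
  have bl : x^-1 b \in Omega l by rewrite -mem_imset_perm blk.
  by rewrite restrE // restrE // conjE.
have bl : x^-1 b \notin Omega l by rewrite -mem_imset_perm blk.
by rewrite (out_perm (restr_perm_on _ _) bl) permKV (out_perm (restr_perm_on _ _) bj).
Qed.

Lemma t_inL i : i != i1 -> phibar i \in Lg.
Proof.
move=> ii1; apply: mem_gen; apply/setUP; right.
by apply: mem_gen; apply: imset_f; rewrite inE.
Qed.

Lemma t_good i : i != i1 -> good (phibar i).
Proof.
move=> ii1 l; exists (tperm i1 i l); split; first exact: t_block.
by apply: Gconj; apply: t_D.
Qed.

Lemma good1 : good 1.
Proof.
move=> l; exists l; rewrite conjsg1; split=> //.
by apply: fix_imset => b _; rewrite perm1.
Qed.

Lemma swap a b : exists s, [/\ s \in Lg, good s &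
  forall l, s @: Omega l = Omega (tperm a b l)].
Proof.
have [->|ab] := eqVneq a b.
  exists 1; split; [exact: group1 | exact: good1 | move=> l].
  by rewrite tperm1 perm1; apply: fix_imset => c _; rewrite perm1.
have [Ea | a1] := eqVneq a i1.
  rewrite Ea in ab *.
  have b1 : b != i1 by rewrite eq_sym.
  by exists (phibar b); split; [apply: t_inL | apply: t_good | apply: t_block].
have [Eb | b1] := eqVneq b i1.
  rewrite Eb in ab *.
  exists (phibar a); split; [exact: t_inL | exact: t_good | ].
  by move=> l; rewrite tpermC; apply: t_block.
exists (phibar a * phibar b * phibar a); split.
- by rewrite !groupM ?t_inL.
- by apply: goodM; [apply: goodM|]; apply: t_good.
move=> l; rewrite !imsetM !t_block //.
have := tpermJ i1 b (tperm i1 a); rewrite tpermL tpermD ?(eq_sym i1) // => E.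
by rewrite -E conjgE !permM tpermV.
Qed.

Lemma base x : good x -> (forall l, x @: Omega l = Omega l) -> x \in Lg.
Proof.
move=> gx fx.
have xN l : x \in 'N(Omega l | 'P).
  apply/astabsP=> a; rewrite /= apermE.
  by rewrite -{1}(fx l) mem_imset //; apply: perm_inj.
have GN l : G l :^ x = G l.
  have [j [xj Gj]] := gx l.
  by rewrite Gj; congr G; apply: Oinj; rewrite -xj fx.
pose y l := restr_perm (Omega l) x.
have yL l : y l \in Lg.
  apply: mem_gen; apply/setUP; left; apply/bigcupP; exists l => //.
  apply/setIP; split; first by rewrite inE restr_perm_on.
  apply/normP; apply: conj_stable => g gG.
  have gon : perm_on (Omega l) g.
    by apply: D_on; apply: subsetP (pHall_sub (Gsyl' l)) _ gG.
  pose z := (y l)^-1 * x.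
  have ez : x = y l * z by rewrite /z mulKVg.
  have zfix : {in Omega l, forall c, z c = c}.
    move=> c cl; rewrite /z permM.
    have c' : (y l)^-1 c \in Omega l by rewrite perm_closed // perm_onV // restr_perm_on.
    by rewrite -(restr_permE (xN l) c') permKV.
  have gyon : perm_on (Omega l) (g ^ y l).
    by rewrite conjgE !perm_onM ?perm_onV ?restr_perm_on.
  have : g ^ x \in G l by rewrite -(GN l) memJ_conjg.
  by rewrite ez conjgM (fix_conj zfix gyon).
have ev r b j : uniq r -> b \in Omega j ->
    (\prod_(l <- r) y l) b = if j \in r then x b else b.
  elim: r b => [|h r IH] b /=; first by rewrite big_nil perm1.
  case/andP=> hr ur bj; rewrite big_cons permM in_cons.
  have [Ehj|hj] := eqVneq h j.
    subst j; rewrite /= restr_permE ?xN // IH //; first by rewrite (negPf hr).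
    by rewrite -(fx h) imset_f.
  rewrite /= (out_perm (restr_perm_on _ _)) ?IH //.
  by apply: (Onot _ bj); rewrite eq_sym.
suff -> : x = \prod_(l <- enum 'I_k) y l by apply: group_prod => l _; apply: yL.
apply/permP=> b; have [j bj] := coverO b.
by rewrite (ev _ _ j) ?enum_uniq // mem_enum.
Qed.

Lemma induct m x : good x -> #|[set l | x @: Omega l != Omega l]| <= m -> x \in Lg.
Proof.
elim: m x => [|m IH] x gx.
  rewrite leqn0 cards_eq0 => /eqP E; apply: base => // l.
  by apply/eqP; have := in_set0 l; rewrite -E inE => /negbFE.
move=> cm.
have [E|[l]] := set_0Vmem [set l | x @: Omega l != Omega l].
  apply: base => // l.
  by apply/eqP; have := in_set0 l; rewrite -E inE => /negbFE.
rewrite inE => xl.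
have [j [xj Gj]] := gx l.
have [s [sL gs bs]] := swap j l.
have jl : j != l by apply: contraNneq xl => ejl; rewrite xj ejl.
suff : x * s \in Lg by move=> xsL; rewrite -(mulgK s x) groupM ?groupV.
apply: IH; first exact: goodM.
rewrite -ltnS; apply: leq_trans cm; apply: proper_card.
rewrite properE; apply/andP; split.
  apply/subsetP => l'; rewrite !inE; apply: contraNN => /eqP xl'.
  have ll' : l != l' by apply: contraNneq xl => ->; rewrite xl'.
  have jl' : j != l'.
    apply: contraNneq jl => ejl'; apply/eqP; apply: Oinj.
    by apply: (imset_inj (@perm_inj _ x)); rewrite xj ejl' xl'.
  by rewrite imsetM xl' bs tpermD.
apply/subsetPn; exists l; rewrite !inE ?xl //.
by rewrite imsetM xj bs tpermL eqxx.
Qed.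

Lemma NH_L : 'N(H) \subset Lg.
Proof.
by apply/subsetP=> x xN; exact: (induct (NH_good xN) (leqnn _)).
Qed.

Lemma main : 'N(H) = ('N_Lg(Hp) :&: 'N_Lg(H2)) * H.
Proof.
set I := 'N_Lg(Hp) :&: 'N_Lg(H2).
have IN : I \subset 'N(H).
  rewrite -HY; apply: normsY.
    by apply: subset_trans (subsetIl _ _) (subsetIr _ _).
  by apply: subset_trans (subsetIr _ _) (subsetIr _ _).
have Fr := Frattini_arg (normalG H) H2syl'.
have JI : 'N_('N(H))(H2) \subset I.
  apply/subsetP=> x /setIP[xN xN2].
  have xL : x \in Lg := subsetP NH_L x xN.
  by apply/setIP; split; apply/setIP; split=> //; apply: (subsetP HpN).
apply/eqP; rewrite eqEsubset; apply/andP; split.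
  by rewrite -{1}Fr (normC IN); apply: mulgS.
by apply: mul_subG => //; apply: normG.
Qed.

End Main.

Unset Implicit Arguments.

Theorem proposition7p2 (p k n : nat) (H : {group {perm 'I_n}})
  (Omega : 'I_k -> {set 'I_n}) (i1 : 'I_k)
  (G : 'I_k -> {group {perm 'I_n}}) (Hp H2 : {group {perm 'I_n}})
  (alpha : 'I_k -> 'I_n) (phi : 'I_k -> 'I_n -> 'I_n)
  (phibar : 'I_k -> {perm 'I_n}) :
  prime p -> odd p -> n = (p * k)%N ->
  injective Omega ->
  [set orbit 'P H x | x : 'I_n] = [set Omega i | i : 'I_k] ->
  (forall i, #|Omega i| = p) ->
  (forall i, perm_iso [set: 'Z_p] (dihedral_nat p)
                      (Omega i) (restr_grp (Omega i) H)) ->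
  (forall i, G i \in 'Syl_p(restr_grp (Omega i) H)) ->
  Hp \in 'Syl_p(H) -> H2 \in 'Syl_2(H) ->
  (forall i, alpha i \in Omega i) ->
  (forall i, restr_grp (Omega i) H2 = 'C_(restr_grp (Omega i) H)[alpha i | 'P]) ->
  (forall i, i != i1 ->
     witnesses_perm_iso (phi i) (Omega i1) (restr_grp (Omega i1) H)
                        (Omega i) (restr_grp (Omega i) H)
     /\ phi i (alpha i1) = alpha i) ->
  (forall i, i != i1 -> bar_involution (Omega i1) (phi i) (phibar i)) ->
  let K := <<[set phibar i | i in [set i | i != i1]]>> in
  let L := <<(\bigcup_(i : 'I_k) 'N_(perm.Sym (Omega i))(G i)) :|: K>> in
  let I := 'N_L(Hp) :&: 'N_L(H2) in
  'N(H) = I * H.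
Proof.
move=> pP oddp _ Oinj Oorb Ocard Diso Gsyl Hpsyl H2syl _ _ Wit Bar K L I.
exact: (@main p k n H Omega i1 G Hp H2 phi phibar pP oddp Oinj Oorb Ocard Diso Gsyl
  Hpsyl H2syl (fun i h => (Wit i h).1) Bar).
Qed.
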